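(* Let $(F,+,\cdot)$ be a (left) near-field and $V$ a near-vector space over $F$. The following are equivalent: (1) $V$ is a multiplicative near-vector space; (2) for every $u\in Q(V)\setminus\{0\}$ there is a multiplicative automorphism $\sigma$ of $F$ with $+_u=+_\sigma$; (3) $V$ is $F$-isomorphic to $F^{\boldsymbol\theta,\boldsymbol{\mathrm{Id}}}$ for some family $\boldsymbol\theta$ of multiplicative automorphisms of $F$; (4) $V$ is $F$-isomorphic to $F^{\boldsymbol{\mathrm{Id}},\boldsymbol\theta}$ for some family $\boldsymbol\theta$ of multiplicative automorphisms of $F$.
   Context: A (left) near-field is $(F,+,\cdot,0,1)$ where $(F,\cdot,1)$ is a monoid, $(F\setminus\{0\},\cdot)$ is a group, $(F,+,0)$ is an abelian group, and $\alpha(\beta+\gamma)=\alpha\beta+\alpha\gamma$. A near-vector space over $F$ is an abelian group $V$ with a left action of $(F,\cdot)$ by group endomorphisms, with $0,1,-1$ acting as $0,\mathrm{id},-\mathrm{id}$, the action free, and the quasi-kernel $Q(V)=\{u:\forall\alpha,\beta\in F\ \exists\gamma\in F,\ \alpha u+\beta u=\gamma u\}$ generating $V$ additively. For $u\in Q(V)\setminus\{0\}$, $\alpha+_u\beta$ is the unique $\gamma$ with $\alpha u+\beta u=\gamma u$. A multiplicative automorphism is a monoid automorphism of $(F,\cdot)$; for such $\tau$, $\alpha+_\tau\beta=\tau^{-1}(\tau(\alpha)+\tau(\beta))$. For an index set $I$ and families $\boldsymbol\sigma=(\sigma_i)_{i\in I}$, $\boldsymbol\rho=(\rho_i)_{i\in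 I}$ of multiplicative automorphisms, $F^{\boldsymbol\sigma,\boldsymbol\rho}$ is the set of finitely supported $(\alpha_i)_{i\in I}\in F^I$ with addition $(\alpha_i)+_{\boldsymbol\sigma}(\beta_i)=(\alpha_i+_{\sigma_i}\beta_i)$ and scalar multiplication $\alpha\cdot_{\boldsymbol\rho}(\alpha_i)=(\rho_i(\alpha)\alpha_i)$; $\boldsymbol{\mathrm{Id}}$ is the family all of whose entries are the identity. An $F$-isomorphism is a bijective additive map $\phi$ with $\phi(\alpha v)=\alpha\phi(v)$. $V$ is multiplicative if it is $F$-isomorphic to $F^{\boldsymbol\sigma,\boldsymbol\rho}$ for some families $\boldsymbol\sigma,\boldsymbol\rho$ of multiplicative automorphisms. *)

(* Defs.v *)
From Stdlib Require Import List.
Set Implicit Arguments.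

Record NearField := {
  NF :> Type;
  nf_add : NF -> NF -> NF;
  nf_opp : NF -> NF;
  nf_zero : NF;
  nf_mul : NF -> NF -> NF;
  nf_one : NF;
  nf_addA : forall a b c, nf_add a (nf_add b c) = nf_add (nf_add a b) c;
  nf_addC : forall a b, nf_add a b = nf_add b a;
  nf_add0 : forall a, nf_add nf_zero a = a;
  nf_addN : forall a, nf_add (nf_opp a) a = nf_zero;
  nf_mulA : forall a b c, nf_mul a (nf_mul b c) = nf_mul (nf_mul a b) c;
  nf_mul1l : forall a, nf_mul nf_one a = a;
  nf_mul1r : forall a, nf_mul a nf_one = a;
  (* (F \ {0}, .) is a group (its identity is necessarily 1) *)
  nf_one_neq0 : nf_one <> nf_zero;
  nf_mul_neq0 : forall a b, a <> nf_zero -> b <> nf_zero -> nf_mul a b <> nf_zero;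
  nf_inv_ex : forall a, a <> nf_zero ->
      exists b, b <> nf_zero /\ nf_mul a b = nf_one /\ nf_mul b a = nf_one;
  nf_mulDr : forall a b c, nf_mul a (nf_add b c) = nf_add (nf_mul a b) (nf_mul a c)
}.

Inductive gen_subgroup (V : Type) (add : V -> V -> V) (opp : V -> V) (zero : V)
    (S : V -> Prop) : V -> Prop :=
  | gen_in : forall v, S v -> gen_subgroup add opp zero S v
  | gen_zero : gen_subgroup add opp zero S zero
  | gen_add : forall v w, gen_subgroup add opp zero S v ->
      gen_subgroup add opp zero S w -> gen_subgroup add opp zero S (add v w)
  | gen_opp : forall v, gen_subgroup add opp zero S v ->
      gen_subgroup add opp zero S (opp v).

Definition quasi_kernel (F : NearField) (V : Type) (addV : V -> V -> V)
  (act : F -> V -> V) (u : V) : Prop :=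
  forall a b : F, exists c : F, addV (act a u) (act b u) = act c u.

Record NearVectorSpace (F : NearField) := {
  NV :> Type;
  nv_add : NV -> NV -> NV;
  nv_opp : NV -> NV;
  nv_zero : NV;
  nv_act : F -> NV -> NV;
  nv_addA : forall u v w, nv_add u (nv_add v w) = nv_add (nv_add u v) w;
  nv_addC : forall u v, nv_add u v = nv_add v u;
  nv_add0 : forall u, nv_add nv_zero u = u;
  nv_addN : forall u, nv_add (nv_opp u) u = nv_zero;
  nv_act_mul : forall a b v, nv_act (nf_mul F a b) v = nv_act a (nv_act b v);
  nv_act1 : forall v, nv_act (nf_one F) v = v;
  nv_actD : forall a v w, nv_act a (nv_add v w) = nv_add (nv_act a v) (nv_act a w);
  nv_act0 : forall v, nv_act (nf_zero F) v = nv_zero;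
  nv_actN1 : forall v, nv_act (nf_opp F (nf_one F)) v = nv_opp v;
  nv_free : forall a b v, nv_act a v = nv_act b v -> v = nv_zero \/ a = b;
  nv_gen : forall v, gen_subgroup nv_add nv_opp nv_zero
                       (@quasi_kernel F NV nv_add nv_act) v
}.

Arguments nv_add {F} _ _ _.
Arguments nv_act {F} _ _ _.
Arguments nv_zero {F} _.

(** Multiplicative automorphism: monoid automorphism of (F,.,1),
    bundled with its (unique) inverse map. *)
Record multAut (F : NearField) := {
  ma_fun :> F -> F;
  ma_inv : F -> F;
  ma_invK : forall a, ma_inv (ma_fun a) = a;
  ma_funK : forall a, ma_fun (ma_inv a) = a;
  ma_mul : forall a b, ma_fun (nf_mul F a b) = nf_mul F (ma_fun a) (ma_fun b);
  ma_one : ma_fun (nf_one F) = nf_one F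
}.

Definition add_aut (F : NearField) (tau : multAut F) (a b : F) : F :=
  ma_inv tau (nf_add F (tau a) (tau b)).

Definition idMA (F : NearField) : multAut F :=
  @Build_multAut F (fun a => a) (fun a => a)
    (fun a => eq_refl) (fun a => eq_refl) (fun a b => eq_refl) eq_refl.

Definition fin_supp (F : NearField) (I : Type) (f : I -> F) : Prop :=
  exists s : list I, forall i, f i <> nf_zero F -> In i s.

(** V is F-isomorphic to F^{sigma,rho}: a bijection phi from V onto the
    finitely supported families (equality of families is pointwise),
    additive for +_sigma and compatible with .rho. *)
Definition F_iso_to (F : NearField) (V : NearVectorSpace F) (I : Type)
  (sigma rho : I -> multAut F) : Prop :=
  exists phi : V -> I -> F,
    (forall v, @fin_supp F I (phi v)) /\
    (forall f : I -> F, @fin_supp F I f -> exists v, forall i, phi v i = f i) /\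
    (forall v w, (forall i, phi v i = phi w i) -> v = w) /\
    (forall v w i, phi (nv_add V v w) i = add_aut (sigma i) (phi v i) (phi w i)) /\
    (forall (a : F) v i, phi (nv_act V a v) i = nf_mul F (rho i a) (phi v i)).

Definition multiplicative_nvs (F : NearField) (V : NearVectorSpace F) : Prop :=
  exists (I : Type) (sigma rho : I -> multAut F), @F_iso_to F V I sigma rho.

(* Main.v *)
Require Import Defs.
From Stdlib Require Import List Classical ClassicalEpsilon ProofIrrelevance.
From mathcomp Require ssreflect classical_sets.

Set Implicit Arguments.

Module ZornM.
Import ssreflect classical_sets.
Lemma zorn_max (T : Type) (P : (T -> Prop) -> Prop) :
  (forall Fm : (T -> Prop) -> Prop, (forall X, Fm X -> P X) ->
     (forall X Y, Fm X -> Fm Y -> (forall t, X t -> Y t) \/ (forall t, Y t -> X t)) ->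
     P (fun t => exists2 X, Fm X & X t)) ->
  exists A, P A /\ forall B, (forall t, A t -> B t) -> P B -> forall t, B t -> A t.
Proof.
move=> H.
have [A [PA Am]] := @Zorn_bigcup T P (fun Fm FP tot => H Fm FP tot).
exists A; split=> // B AB PB t Bt.
apply: NNPP => nAt.
apply: (Am B) => //; split=> // BA; exact: nAt (BA t Bt).
Qed.
End ZornM.

Section NF.
Variable F : NearField.
Local Notation "0" := (nf_zero F).
Local Notation "1" := (nf_one F).
Local Notation "a + b" := (nf_add F a b).
Local Notation "a * b" := (nf_mul F a b).
Local Notation "- a" := (nf_opp F a).

Lemma nf_addr0 a : a + 0 = a.
Proof. rewrite nf_addC; apply nf_add0. Qed.

Lemma nf_addrN a : a + (- a) = 0.
Proof. rewrite nf_addC; apply nf_addN. Qed.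

Lemma nf_addKl a b c : a + b = a + c -> b = c.
Proof.
  intro H. rewrite <- (nf_add0 F b), <- (nf_add0 F c), <- (nf_addN F a).
  rewrite <- !nf_addA, H. reflexivity.
Qed.

Lemma nf_add_idem a : a + a = a -> a = 0.
Proof. intro H. apply (nf_addKl a). rewrite nf_addr0. exact H. Qed.

Lemma nf_mulr0 a : a * 0 = 0.
Proof. apply nf_add_idem. rewrite <- nf_mulDr, nf_add0. reflexivity. Qed.

Lemma nf_mul0l a : 0 * a = 0.
Proof.
  destruct (classic (a = 0)) as [->|Ha]; [apply nf_mulr0|].
  destruct (@nf_inv_ex F a Ha) as [b [Hb [Hab Hba]]].
  apply NNPP. intro Hz. apply (@nf_mul_neq0 F _ _ Hz Hb).
  rewrite <- nf_mulA, Hab. apply nf_mul1r.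
Qed.

Lemma ma0 (s : multAut F) : s 0 = 0.
Proof.
  rewrite <- (nf_mul0l (ma_inv s 0)) at 1. rewrite ma_mul, ma_funK. apply nf_mulr0.
Qed.

Lemma ma_inv0 (s : multAut F) : ma_inv s 0 = 0.
Proof. rewrite <- (ma0 s) at 1. apply ma_invK. Qed.

Lemma ma_inv_mul (s : multAut F) a b : ma_inv s (a * b) = ma_inv s a * ma_inv s b.
Proof.
  rewrite <- (ma_funK s a) at 1. rewrite <- (ma_funK s b) at 1.
  rewrite <- ma_mul. apply ma_invK.
Qed.

Lemma ma_inv_one (s : multAut F) : ma_inv s 1 = 1.
Proof. rewrite <- (ma_one s) at 1. apply ma_invK. Qed.

Definition compMA (s r : multAut F) : multAut F.
Proof.
  refine (@Build_multAut F (fun a => s (r a)) (fun a => ma_inv r (ma_inv s a)) _ _ _ _).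
  - intro a. rewrite !ma_invK. reflexivity.
  - intro a. rewrite !ma_funK. reflexivity.
  - intros a b. rewrite !ma_mul. reflexivity.
  - rewrite !ma_one. reflexivity.
Defined.

Definition conjMA (t : multAut F) (w w' : F) (H1 : w * w' = 1) (H2 : w' * w = 1) :
  multAut F.
Proof.
  refine (@Build_multAut F (fun x => w' * (t x * w)) (fun y => ma_inv t (w * (y * w'))) _ _ _ _).
  - intro a. rewrite !nf_mulA. rewrite H1, nf_mul1l, <- nf_mulA, H1, nf_mul1r.
    apply ma_invK.
  - intro a. rewrite ma_funK. rewrite !nf_mulA. rewrite H2, nf_mul1l, <- nf_mulA, H2, nf_mul1r.
    reflexivity.
  - intros a b. rewrite ma_mul. rewrite !nf_mulA.
    f_equal. rewrite <- !nf_mulA. f_equal. f_equal. rewrite (nf_mulA _ w w'), H1, nf_mul1l.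
    reflexivity.
  - rewrite ma_one, nf_mul1l. exact H2.
Defined.

End NF.
Arguments compMA {F}.
Arguments conjMA {F}.

Section Iso.
Variable F : NearField.
Variable V : NearVectorSpace F.

Lemma iso_P3 (I : Type) (s r : I -> multAut F) :
  @F_iso_to F V I s r -> @F_iso_to F V I (fun i => compMA (s i) (r i)) (fun _ => idMA F).
Proof.
 intros [phi [Hfs [Hsur [Hinj [Hadd Hact]]]]].
 exists (fun v i => ma_inv (r i) (phi v i)). split; [|split; [|split; [|split]]].
 - intro v. destruct (Hfs v) as [l Hl]. exists l. intros i Hi. apply Hl. intro E. apply Hi.
   rewrite E. apply ma_inv0.
 - intros f [l Hl]. destruct (Hsur (fun i => r i (f i))) as [v Hv].
   + exists l. intros i Hi. apply Hl. intro E; apply Hi; rewrite E; apply ma0.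
   + exists v. intro i. rewrite Hv. apply ma_invK.
 - intros v w H. apply Hinj. intro i. specialize (H i).
   rewrite <- (ma_funK (r i) (phi v i)), <- (ma_funK (r i) (phi w i)), H. reflexivity.
 - intros v w i. rewrite Hadd. unfold add_aut. simpl. rewrite !ma_funK. reflexivity.
 - intros a v i. rewrite Hact. simpl. rewrite ma_inv_mul, ma_invK. reflexivity.
Qed.

Lemma iso_P4 (I : Type) (s r : I -> multAut F) :
  @F_iso_to F V I s r -> @F_iso_to F V I (fun _ => idMA F) (fun i => compMA (s i) (r i)).
Proof.
 intros [phi [Hfs [Hsur [Hinj [Hadd Hact]]]]].
 exists (fun v i => s i (phi v i)). split; [|split; [|split; [|split]]].
 - intro v. destruct (Hfs v) as [l Hl]. exists l. intros i Hi. apply Hl. intro E. apply Hi.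
   rewrite E. apply ma0.
 - intros f [l Hl]. destruct (Hsur (fun i => ma_inv (s i) (f i))) as [v Hv].
   + exists l. intros i Hi. apply Hl. intro E; apply Hi; rewrite E; apply ma_inv0.
   + exists v. intro i. rewrite Hv. apply ma_funK.
 - intros v w H. apply Hinj. intro i. specialize (H i).
   rewrite <- (ma_invK (s i) (phi v i)), <- (ma_invK (s i) (phi w i)), H. reflexivity.
 - intros v w i. rewrite Hadd. unfold add_aut. simpl. rewrite !ma_funK. reflexivity.
 - intros a v i. rewrite Hact. simpl. rewrite ma_mul. reflexivity.
Qed.

End Iso.

Section VS.
Variable F : NearField.
Variable V : NearVectorSpace F.
Local Notation "0" := (nv_zero V).
Local Notation "a + b" := (nv_add V a b).
Local Notation "- a" := (nv_opp V a).
Local Notation "a *: v" := (nv_act V a v) (at level 40).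

Lemma vaddr0 u : u + 0 = u.
Proof. rewrite nv_addC; apply nv_add0. Qed.

Lemma vaddrN u : u + (- u) = 0.
Proof. rewrite nv_addC; apply nv_addN. Qed.

Lemma vaddKl a b c : a + b = a + c -> b = c.
Proof.
  intro H. rewrite <- (nv_add0 V b), <- (nv_add0 V c), <- (nv_addN V a).
  rewrite <- !nv_addA, H. reflexivity.
Qed.

Lemma vopp_uniq u w : u + w = 0 -> - u = w.
Proof. intro H. apply (vaddKl u). rewrite vaddrN, H. reflexivity. Qed.

Lemma voppK u : - (- u) = u.
Proof. apply vopp_uniq. apply nv_addN. Qed.

Lemma vACA a b c d : (a + b) + (c + d) = (a + c) + (b + d).
Proof.
  rewrite <- !nv_addA. f_equal. rewrite !nv_addA. f_equal. apply nv_addC.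
Qed.

Lemma voppD u w : - (u + w) = - u + - w.
Proof. apply vopp_uniq. rewrite vACA, !vaddrN. apply nv_add0. Qed.

Lemma vopp0 : - 0 = 0.
Proof. apply vopp_uniq. apply nv_add0. Qed.

Lemma vact0v a : a *: 0 = 0.
Proof.
  apply (vaddKl (a *: 0)). rewrite vaddr0, <- nv_actD, nv_add0. reflexivity.
Qed.

Lemma vactN a u : a *: (- u) = - (a *: u).
Proof. symmetry. apply vopp_uniq. rewrite <- nv_actD, vaddrN. apply vact0v. Qed.

Lemma vsub0 u w : u + - w = 0 -> u = w.
Proof.
  intro H. rewrite <- (vaddr0 u), <- (nv_addN V w), nv_addA, H. apply nv_add0.
Qed.

Lemma P4_P2 (I : Type) (th : I -> multAut F) :
  @F_iso_to F V I (fun _ => idMA F) th ->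
  forall u : V, @quasi_kernel F V (nv_add V) (nv_act V) u -> u <> 0 ->
      exists sigma : multAut F,
        forall a b : F, (a *: u) + (b *: u) = (add_aut sigma a b) *: u.
Proof.
  intros [psi [_ [_ [Hinj [Hadd Hact]]]]] u Hq Hu.
  assert (H0 : forall i, psi 0 i = nf_zero F).
  { intro i. apply nf_add_idem. pose proof (Hadd 0 0 i) as H. rewrite nv_add0 in H.
    symmetry. exact H. }
  destruct (classic (exists j, psi u j <> nf_zero F)) as [[j Hj]|Hn].
  2:{ exfalso; apply Hu; apply Hinj; intro i; rewrite H0; apply NNPP; intro; apply Hn; eauto. }
  destruct (@nf_inv_ex F _ Hj) as [w' [_ [H1 H2]]].
  exists (conjMA (th j) (psi u j) w' H1 H2).
  intros a b. destruct (Hq a b) as [c Hc]. rewrite Hc. f_equal. symmetry.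
  unfold add_aut.
  transitivity (ma_inv (conjMA (th j) (psi u j) w' H1 H2) (conjMA (th j) (psi u j) w' H1 H2 c));
    [|apply ma_invK].
  f_equal. simpl.
  rewrite <- nf_mulDr. f_equal. rewrite <- !Hact, <- Hc, Hadd. reflexivity.
Qed.

End VS.

Section Basis.
Variable F : NearField.
Variable V : NearVectorSpace F.
Local Notation "0" := (nv_zero V).
Local Notation "a + b" := (nv_add V a b).
Local Notation "- a" := (nv_opp V a).
Local Notation "a *: v" := (nv_act V a v) (at level 40).

Definition QK (u : V) := @quasi_kernel F V (nv_add V) (nv_act V) u.

Hypothesis H2 : forall u : V, QK u -> u <> 0 ->
      exists sigma : multAut F,
        forall a b : F, (a *: u) + (b *: u) = (add_aut sigma a b) *: u.

Definition span (P : V -> Prop) :=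
  gen_subgroup (nv_add V) (nv_opp V) (nv_zero V) (fun v => exists c x, P c /\ v = x *: c).

Lemma GA a w : (a + w) + - w = a.
Proof. rewrite <- nv_addA, vaddrN. apply vaddr0. Qed.

Lemma GA2 a w : (a + w) + - a = w.
Proof. rewrite (nv_addC V a w). apply GA. Qed.

Lemma G_a v a b : (v + - b) + - (v + - a) = a + - b.
Proof. rewrite voppD, voppK, vACA, vaddrN, nv_add0. apply nv_addC. Qed.

Lemma G3 v w a : (v + - a) + - (w + - a) = v + - w.
Proof. rewrite voppD, voppK, vACA, nv_addN. apply vaddr0. Qed.

Lemma G4 v w a b : (v + w) + - (a + b) = (v + - a) + (w + - b).
Proof. rewrite voppD. apply vACA. Qed.

Lemma G5 v c a : (v + c) + - a = (v + - a) + c.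
Proof. rewrite <- !nv_addA. f_equal. apply nv_addC. Qed.

Lemma span_mono (P P' : V -> Prop) : (forall c, P c -> P' c) -> forall v, span P v -> span P' v.
Proof.
  intros HP v Hv; induction Hv as [v [c [x [Hc ->]]]| |v w _ IH1 _ IH2|v _ IH].
  - apply gen_in. exists c, x. auto.
  - apply gen_zero.
  - apply gen_add; auto.
  - apply gen_opp; auto.
Qed.

Lemma span_act P a v : span P v -> span P (a *: v).
Proof.
  intro Hv; induction Hv as [v [c [x [Hc ->]]]| |v w _ IH1 _ IH2|v _ IH].
  - rewrite <- nv_act_mul. apply gen_in. exists c, (nf_mul F a x). auto.
  - rewrite vact0v. apply gen_zero.
  - rewrite nv_actD. apply gen_add; auto.
  - rewrite vactN. apply gen_opp; auto.
Qed.

Lemma span_sub P v w : span P v -> span P w -> span P (v + - w).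
Proof. intros. apply gen_add; [|apply gen_opp]; auto. Qed.

Lemma span_ins P u : QK u -> u <> 0 -> forall v, span (fun c => c = u \/ P c) v ->
  exists x w, span P w /\ v = x *: u + w.
Proof.
  intros Hq Hu. destruct (H2 Hq Hu) as [s Hs]. intros v Hv.
  induction Hv as [v [c [x [[->|Hc] ->]]]| |v w _ [x1 [w1 [Hw1 ->]]] _ [x2 [w2 [Hw2 ->]]]|v _ [x [w [Hw ->]]]].
  - exists x, 0. split; [apply gen_zero| symmetry; apply vaddr0].
  - exists (nf_zero F), (x *: c). split. apply gen_in; exists c, x; auto.
    rewrite nv_act0, nv_add0. reflexivity.
  - exists (nf_zero F), 0. split. apply gen_zero. rewrite nv_act0, nv_add0; reflexivity.
  - exists (add_aut s x1 x2), (w1 + w2). split. apply gen_add; auto. rewrite <- Hs. apply vACA.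
  - exists (nf_mul F (nf_opp F (nf_one F)) x), (- w). split. apply gen_opp; auto.
    rewrite voppD, nv_act_mul, nv_actN1. reflexivity.
Qed.

Definition indep (A : V -> Prop) := forall b x, A b ->
  span (fun c => A c /\ c <> b) (x *: b) -> x = nf_zero F.

Definition Pz (A : V -> Prop) := (forall c, A c -> QK c /\ c <> 0) /\ indep A.

Lemma not_span_coef (A : V -> Prop) u y : ~ span A u -> span A (y *: u) -> y = nf_zero F.
Proof.
  intros Hn Hs. apply NNPP. intro Hy. apply Hn.
  destruct (@nf_inv_ex F _ Hy) as [z [_ [_ Hzy]]].
  rewrite <- (nv_act1 V u), <- Hzy, nv_act_mul. apply span_act. exact Hs.
Qed.

Lemma chain_span (Fm : (V -> Prop) -> Prop) b
  (tot : forall X Y, Fm X -> Fm Y -> (forall t, X t -> Y t) \/ (forall t, Y t -> X t))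
  X0 (HX0 : Fm X0) v :
  span (fun c => (exists2 X, Fm X & X c) /\ c <> b) v ->
  exists X, Fm X /\ (forall t, X0 t -> X t) /\ span (fun c => X c /\ c <> b) v.
Proof.
  intro Hv; induction Hv as [v [c [x [[[Y FY Yc] cb] ->]]]| |v w _ [X1 [F1 [S1 H1]]] _ [X2 [F2 [S2 H2']]]|v _ [X [FX [SX HX]]]].
  - destruct (tot X0 Y HX0 FY) as [HXY|HYX].
    + exists Y. split; [auto|split; [auto|]]. apply gen_in. exists c, x. auto.
    + exists X0. split; [auto|split; [auto|]]. apply gen_in. exists c, x. auto.
  - exists X0. split; [auto|split; [auto|]]. apply gen_zero.
  - destruct (tot X1 X2 F1 F2) as [H12|H21].
    + exists X2. split; [auto|split; [auto|]]. apply gen_add; auto.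
      apply span_mono with (2 := H1). intros c [? ?]; auto.
    + exists X1. split; [auto|split; [auto|]]. apply gen_add; auto.
      apply span_mono with (2 := H2'). intros c [? ?]; auto.
  - exists X. split; [auto|split; [auto|]]. apply gen_opp; auto.
Qed.

Lemma chain_Pz (Fm : (V -> Prop) -> Prop) : (forall X, Fm X -> Pz X) ->
  (forall X Y, Fm X -> Fm Y -> (forall t, X t -> Y t) \/ (forall t, Y t -> X t)) ->
  Pz (fun t => exists2 X, Fm X & X t).
Proof.
  intros HFm tot. split.
  - intros c [X FX Xc]. apply (proj1 (HFm X FX)); auto.
  - intros b x [X FX Xb] Hs. destruct (@chain_span Fm b tot X FX _ Hs) as [Y [FY [XY HY]]].
    apply ((proj2 (HFm Y FY)) b x); auto.
Qed.

Section Max.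
Variable A : V -> Prop.
Hypothesis HA : Pz A.
Hypothesis Hmax : forall B, (forall t, A t -> B t) -> Pz B -> forall t, B t -> A t.

Lemma max_span u : QK u -> span A u.
Proof.
  intro Hq. apply NNPP; intro Hn.
  assert (Hu: u <> 0) by (intro E; apply Hn; rewrite E; apply gen_zero).
  assert (HB : Pz (fun c => c = u \/ A c)).
  { split.
    - intros c [->|Hc]; auto. apply (proj1 HA); auto.
    - intros b x [->|Hb] Hs.
      + eapply not_span_coef; [exact Hn|]. apply span_mono with (2:=Hs).
        intros c [[->|Hc] Hcu]; [congruence|auto].
      + assert (Hs2 : span (fun c => c = u \/ (A c /\ c <> b)) (x *: b))
          by (apply span_mono with (2:=Hs); intros c [[->|Hc] Hcb]; auto).
        destruct (@span_ins _ _ Hq Hu _ Hs2) as [y [w [Hw Hxb]]].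
        assert (Hy : y = nf_zero F).
        { eapply not_span_coef; [exact Hn|]. rewrite <- (GA (y *: u) w), <- Hxb.
          apply span_sub. apply gen_in. exists b, x. auto.
          apply span_mono with (2 := Hw). intros c [? ?]; auto. }
        subst y. rewrite nv_act0, nv_add0 in Hxb. apply ((proj2 HA) b x Hb).
        rewrite Hxb. exact Hw. }
  apply Hn. apply gen_in. exists u, (nf_one F). split.
  - apply (@Hmax (fun c => c = u \/ A c)); auto.
  - rewrite nv_act1; reflexivity.
Qed.

Lemma max_all v : span A v.
Proof.
  induction (nv_gen V v) as [v Hv| |v w _ IH1 _ IH2|v _ IH].
  - apply max_span. exact Hv.
  - apply gen_zero.
  - apply gen_add; auto.
  - apply gen_opp; auto.
Qed.

Definition I := {c : V | A c}.

Lemma val_inj (i j : I) : proj1_sig i = proj1_sig j -> i = j.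
Proof.
  destruct i as [i Hi], j as [j Hj]. simpl. intro E. subst j. f_equal. apply proof_irrelevance.
Qed.

Lemma valQ (i : I) : QK (proj1_sig i) /\ proj1_sig i <> 0.
Proof. apply (proj1 HA). apply proj2_sig. Qed.

Definition Sp (i : I) := span (fun c => A c /\ c <> proj1_sig i).

Definition th (i : I) : multAut F :=
  proj1_sig (constructive_indefinite_description _ (H2 (proj1 (valQ i)) (proj2 (valQ i)))).

Lemma thP i a b : a *: proj1_sig i + b *: proj1_sig i = add_aut (th i) a b *: proj1_sig i.
Proof.
  unfold th. destruct (constructive_indefinite_description _ _) as [s Hs]. apply Hs.
Qed.

Lemma coord_ex v i : exists x, Sp i (v + - (x *: proj1_sig i)).
Proof.
  assert (Hs : span (fun c => c = proj1_sig i \/ (A c /\ c <> proj1_sig i)) v).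
  { apply span_mono with (2 := max_all v). intros c Hc.
    destruct (classic (c = proj1_sig i)); auto. }
  destruct (@span_ins _ _ (proj1 (valQ i)) (proj2 (valQ i)) _ Hs) as [x [w [Hw ->]]].
  exists x. rewrite GA2. exact Hw.
Qed.

Lemma coord_uniq v i x y : Sp i (v + - (x *: proj1_sig i)) -> Sp i (v + - (y *: proj1_sig i)) ->
  x = y.
Proof.
  intros Hx Hy. pose proof (span_sub Hy Hx) as H. rewrite G_a in H.
  rewrite <- nv_actN1, <- nv_act_mul, thP in H.
  pose proof ((proj2 HA) _ _ (proj2_sig i) H) as Hz.
  assert (E : x *: proj1_sig i + - (y *: proj1_sig i) = 0).
  { rewrite <- nv_actN1, <- nv_act_mul, thP, Hz. apply nv_act0. }
  apply vsub0 in E. destruct (nv_free _ _ _ _ E) as [E'|E']; auto.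
  exfalso. apply (proj2 (valQ i)). exact E'.
Qed.

Definition phi (v : V) (i : I) : F :=
  proj1_sig (constructive_indefinite_description _ (coord_ex v i)).

Lemma phiP v i : Sp i (v + - (phi v i *: proj1_sig i)).
Proof. unfold phi. destruct (constructive_indefinite_description _ _) as [x Hx]. exact Hx. Qed.

Lemma phi_eq v i x : Sp i (v + - (x *: proj1_sig i)) -> phi v i = x.
Proof. intro H. eapply coord_uniq; [apply phiP | exact H]. Qed.

Definition Ps (s : list I) (c : V) := exists i, In i s /\ proj1_sig i = c.

Lemma fin_list v : span A v -> exists s, span (Ps s) v.
Proof.
  intro Hv; induction Hv as [v [c [x [Hc ->]]]| |v w _ [s1 H1] _ [s2 H2']|v _ [s H]].
  - exists (exist _ c Hc :: nil). apply gen_in. exists c, x. split; auto.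
    exists (exist _ c Hc). simpl. auto.
  - exists nil. apply gen_zero.
  - exists (s1 ++ s2). apply gen_add.
    + apply span_mono with (2 := H1). intros c [j [Hj Ej]]. exists j. split; auto.
      apply in_or_app; auto.
    + apply span_mono with (2 := H2'). intros c [j [Hj Ej]]. exists j. split; auto.
      apply in_or_app; auto.
  - exists s. apply gen_opp. exact H.
Qed.

Lemma sp0 i : Sp i (0 + - (nf_zero F *: proj1_sig i)).
Proof. rewrite nv_act0, vopp0, vaddr0. apply gen_zero. Qed.

Lemma zc s : forall d, span (Ps s) d -> (forall i, Sp i d) -> d = 0.
Proof.
  induction s as [|j s IH]; intros d Hd HS.
  - clear HS. induction Hd as [v [c [x [[k [[] _]] _]]]| |v w _ IH1 _ IH2|v _ IH'].
    + reflexivity.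
    + rewrite IH1, IH2. apply nv_add0.
    + rewrite IH'. apply vopp0.
  - destruct (classic (In j s)) as [Hj|Hj].
    + apply IH; auto. apply span_mono with (2 := Hd). intros c [k [[E|Hk] <-]].
      * subst k. exists j; auto.
      * exists k; auto.
    + assert (Hs : span (fun c => c = proj1_sig j \/ Ps s c) d).
      { apply span_mono with (2 := Hd). intros c [k [[E|Hk] <-]].
        - subst k; auto.
        - right; exists k; auto. }
      destruct (@span_ins _ _ (proj1 (valQ j)) (proj2 (valQ j)) _ Hs) as [x [w [Hw Ed]]].
      assert (Hx : x = nf_zero F).
      { apply (@coord_uniq d j x (nf_zero F)).
        - rewrite Ed, GA2. apply span_mono with (2 := Hw). intros c [k [Hk <-]].
          split; [apply proj2_sig|]. intro E. apply val_inj in E. subst k. auto.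
        - rewrite nv_act0, vopp0, vaddr0. apply HS. }
      subst x. rewrite nv_act0, nv_add0 in Ed. subst d. apply IH; auto.
Qed.

Lemma basis_iso : @F_iso_to F V I th (fun _ => idMA F).
Proof.
  exists phi. split; [|split; [|split; [|split]]].
  - intro v. destruct (fin_list (max_all v)) as [s Hs]. exists s. intros i Hi.
    apply NNPP; intro Hni. apply Hi. apply phi_eq. rewrite nv_act0, vopp0, vaddr0.
    apply span_mono with (2:=Hs). intros c [j [Hj <-]]. split. apply proj2_sig.
    intro E. apply Hni. apply val_inj in E. subst j. auto.
  - intros f [s Hs]. revert f Hs; induction s as [|j s IH]; intros f Hs.
    + exists 0. intro i. assert (Hf : f i = nf_zero F) by (apply NNPP; intro H; apply (Hs i H)).
      rewrite Hf. apply phi_eq. apply sp0.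
    + pose (f' := fun i => if excluded_middle_informative (i = j) then nf_zero F else f i).
      destruct (IH f') as [v' Hv'].
      { intros i Hi. unfold f' in Hi. destruct (excluded_middle_informative (i = j)); [congruence|].
        destruct (Hs i Hi); [congruence|auto]. }
      exists (v' + f j *: proj1_sig j). intro i.
      destruct (excluded_middle_informative (i = j)) as [->|Hij].
      * apply phi_eq. rewrite GA. pose proof (phiP v' j) as H. rewrite Hv' in H. unfold f' in H.
        destruct (excluded_middle_informative (j = j)); [|congruence].
        rewrite nv_act0, vopp0, vaddr0 in H. exact H.
      * transitivity (phi v' i).
        -- apply phi_eq. rewrite G5. apply gen_add. apply phiP.
           apply gen_in. exists (proj1_sig j), (f j). split; auto. split. apply proj2_sig.
           intro E. apply Hij. apply val_inj. auto.
        -- rewrite Hv'. unfold f'. destruct (excluded_middle_informative (i = j)); [congruence|reflexivity].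
  - intros v w H. apply vsub0. destruct (fin_list (max_all (v + - w))) as [s Hs].
    apply (zc Hs). intro i. rewrite <- (G3 v w (phi v i *: proj1_sig i)).
    apply span_sub. apply phiP. rewrite H. apply phiP.
  - intros v w i. apply phi_eq. rewrite <- thP, G4. apply gen_add; apply phiP.
  - intros a v i. simpl. apply phi_eq. rewrite nv_act_mul, <- vactN, <- nv_actD.
    apply span_act, phiP.
Qed.

End Max.

Lemma P2_P3 : exists (I : Type) (theta : I -> multAut F),
      @F_iso_to F V I theta (fun _ => idMA F).
Proof.
  destruct (@ZornM.zorn_max V Pz chain_Pz) as [A [HA Hmax]].
  exists (I A), (th HA). apply basis_iso. exact Hmax.
Qed.

End Basis.

Theorem theorem3p16 (F : NearField) (V : NearVectorSpace F) :
  let P1 := multiplicative_nvs V in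
  let P2 := forall u : V,
      @quasi_kernel F V (nv_add V) (nv_act V) u -> u <> nv_zero V ->
      exists sigma : multAut F,
        forall a b : F,
          nv_add V (nv_act V a u) (nv_act V b u) = nv_act V (add_aut sigma a b) u in
  let P3 := exists (I : Type) (theta : I -> multAut F),
      @F_iso_to F V I theta (fun _ => idMA F) in
  let P4 := exists (I : Type) (theta : I -> multAut F),
      @F_iso_to F V I (fun _ => idMA F) theta in
  (P1 <-> P2) /\ (P1 <-> P3) /\ (P1 <-> P4).
Proof.
  intros P1 P2 P3 P4.
  assert (E14 : P1 -> P4).
  { intros [I [s [r H]]]. exists I, (fun i => compMA (s i) (r i)). eapply iso_P4; exact H. }
  assert (E13 : P1 -> P3).
  { intros [I [s [r H]]]. exists I, (fun i => compMA (s i) (r i)). eapply iso_P3; exact H. }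
  assert (E31 : P3 -> P1). { intros [I [t H]]. exists I, t, (fun _ => idMA F). exact H. }
  assert (E41 : P4 -> P1). { intros [I [t H]]. exists I, (fun _ => idMA F), t. exact H. }
  assert (E42 : P4 -> P2). { intros [I [t H]] u Hq Hu. eapply P4_P2; eauto. }
  assert (E23 : P2 -> P3). { intro H. eapply P2_P3. exact H. }
  tauto.
Qed.
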